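(* (Passivity of the Soft-PVTOL.) Let $m,m_l,m_r,I,I_l,I_r,l_l,l_r,g_0>0$, let $\tau:[0,T]\to\mathbb{R}^5$ be continuous, and let $\mathbf{q}:[0,T]\to\mathbb{R}^5$ be a $C^2$ solution of $D(\mathbf{q})\ddot{\mathbf{q}}+C(\mathbf{q},\dot{\mathbf{q}})\dot{\mathbf{q}}+g(\mathbf{q})=\tau$. Let $H=\frac12\dot{\mathbf{q}}^{\intercal}D(\mathbf{q})\dot{\mathbf{q}}+\mathcal{P}(\mathbf{q})$ with $\mathcal{P}(\mathbf{q})=g_0\big(\Theta_1z_v+m_ll_l\frac{1-\cos q_l}{q_l}+m_rl_r\frac{1-\cos q_r}{q_r}\big)$. Then $\frac{d}{dt}H(t)=\dot{\mathbf{q}}(t)^{\intercal}\tau(t)$ for all $t\in[0,T]$; consequently $\int_0^T\dot{\mathbf{q}}^{\intercal}\tau\,dt=H(T)-H(0)\ge -H(0)+\min\mathcal{P}$ along the solution, i.e. the map $\tau\mapsto\dot{\mathbf{q}}$ is passive with storage function $H$ (up to the lower bound of $\mathcal{P}$ on the relevant set).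
   Context: Coordinates $\mathbf{q}=(x_v,z_v,\theta,q_l,q_r)^{\intercal}$. Quotients are extended continuously at $q_l=0$ or $q_r=0$ (removable singularities). Set $\Theta_1=m+m_l+m_r$, $\Theta_2=I$, $\Theta_3=l_lm_l$, $\Theta_4=l_rm_r$, $\Theta_5=I_l$, $\Theta_6=I_r$. $\mathscr{D}_1=\frac{\sin q_l-q_l\cos q_l}{q_l^2}$, $\mathscr{D}_2=\frac{\cos q_l+q_l\sin q_l-1}{q_l^2}$, $\mathscr{D}_3=\frac{q_r\cos q_r-\sin q_r}{q_r^2}$, $\mathscr{D}_4=\frac{\cos q_r+q_r\sin q_r-1}{q_r^2}$, $\mathscr{D}_5=\frac{q_l^2+2-2\cos q_l-2q_l\sin q_l}{q_l^4}$, $\mathscr{D}_6=\frac{q_r^2+2-2\cos q_r-2q_r\sin q_r}{q_r^4}$. $$D(\mathbf{q})=\begin{pmatrix}\Theta_1&0&0&\Theta_3\mathscr{D}_1&\Theta_4\mathscr{D}_3\\0&\Theta_1&0&\Theta_3\mathscr{D}_2&\Theta_4\mathscr{D}_4\\0&0&\Theta_2&0&0\\\Theta_3\mathscr{D}_1&\Theta_3\mathscr{D}_2&0&l_l\Theta_3\mathscr{D}_5+\Theta_5&0\\\Theta_4\mathscr{D}_3&\Theta_4\mathscr{D}_4&0&0&l_r\Theta_4\mathscr{D}_6+\Theta_6\end{pmatrix}.$$ $\mathscr{C}_1=\frac{(q_l^2-2)\sin q_l+2q_l\cos q_l}{q_l^3}$, $\mathscr{C}_2=\frac{(q_l^2-2)\cos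 q_l-2q_l\sin q_l+2}{q_l^3}$, $\mathscr{C}_3=\frac{(q_r^2-2)\sin q_r+2q_r\cos q_r}{q_r^3}$, $\mathscr{C}_4=\frac{(q_r^2-2)\cos q_r-2q_r\sin q_r+2}{q_r^3}$, $\mathscr{C}_5=\frac{(q_l\cos(q_l/2)-2\sin(q_l/2))^2}{q_l^5}$, $\mathscr{C}_6=\frac{(q_r\cos(q_r/2)-2\sin(q_r/2))^2}{q_r^5}$. $$C(\mathbf{q},\dot{\mathbf{q}})=\begin{pmatrix}0&0&0&\Theta_3\mathscr{C}_1\dot q_l&-\Theta_4\mathscr{C}_3\dot q_r\\0&0&0&\Theta_3\mathscr{C}_2\dot q_l&\Theta_4\mathscr{C}_4\dot q_r\\0&0&0&0&0\\0&0&0&-2l_l\Theta_3\mathscr{C}_5\dot q_l&0\\0&0&0&0&-2l_r\Theta_4\mathscr{C}_6\dot q_r\end{pmatrix}.$$ $$g(\mathbf{q})=\Big(0,\ g_0\Theta_1,\ 0,\ g_0m_ll_l\tfrac{q_l\sin q_l+\cos q_l-1}{q_l^2},\ g_0m_rl_r\tfrac{q_r\sin q_r+\cos q_r-1}{q_r^2}\Big)^{\intercal}.$$ *)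

(* Defs.v *)
From Stdlib Require Import Reals Lra.
From Coquelicot Require Import Coquelicot.
Open Scope R_scope.

(* Vectors of R^5 and 5x5 matrices, indexed by 0..4.
   Coordinates: q 0 = x_v, q 1 = z_v, q 2 = theta, q 3 = q_l, q 4 = q_r. *)
Definition Vec5 := nat -> R.
Definition Mat5 := nat -> nat -> R.

Definition dot5 (u v : Vec5) : R :=
  u 0%nat * v 0%nat + u 1%nat * v 1%nat + u 2%nat * v 2%nat
  + u 3%nat * v 3%nat + u 4%nat * v 4%nat.

Definition mv5 (M : Mat5) (v : Vec5) : Vec5 :=
  fun i => M i 0%nat * v 0%nat + M i 1%nat * v 1%nat + M i 2%nat * v 2%nat
           + M i 3%nat * v 3%nat + M i 4%nat * v 4%nat.

Record params := Params {
  p_m : R; p_ml : R; p_mr : R; p_I : R; p_Il : R; p_Ir : R;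
  p_ll : R; p_lr : R; p_g0 : R }.

Definition params_pos (p : params) : Prop :=
  0 < p_m p /\ 0 < p_ml p /\ 0 < p_mr p /\ 0 < p_I p /\ 0 < p_Il p /\
  0 < p_Ir p /\ 0 < p_ll p /\ 0 < p_lr p /\ 0 < p_g0 p.

Definition Th1 p := p_m p + p_ml p + p_mr p.
Definition Th2 p := p_I p.
Definition Th3 p := p_ll p * p_ml p.
Definition Th4 p := p_lr p * p_mr p.
Definition Th5 p := p_Il p.
Definition Th6 p := p_Ir p.

(* Quotients, extended continuously at 0 (removable singularities). *)
Definition ext0 (v0 : R) (f : R -> R) (q : R) : R :=
  if Req_EM_T q 0 then v0 else f q.

Definition Dl1 := ext0 0 (fun q => (sin q - q * cos q) / q ^ 2).
Definition Dl2 := ext0 (1/2) (fun q => (cos q + q * sin q - 1) / q ^ 2).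
Definition Dl3 := ext0 0 (fun q => (q * cos q - sin q) / q ^ 2).
Definition Dl4 := ext0 (1/2) (fun q => (cos q + q * sin q - 1) / q ^ 2).
Definition Dl5 := ext0 (1/4) (fun q => (q ^ 2 + 2 - 2 * cos q - 2 * q * sin q) / q ^ 4).
Definition Dl6 := Dl5.

Definition Cl1 := ext0 (1/3) (fun q => ((q ^ 2 - 2) * sin q + 2 * q * cos q) / q ^ 3).
Definition Cl2 := ext0 0 (fun q => ((q ^ 2 - 2) * cos q - 2 * q * sin q + 2) / q ^ 3).
Definition Cl3 := Cl1.
Definition Cl4 := Cl2.
Definition Cl5 := ext0 0 (fun q => (q * cos (q / 2) - 2 * sin (q / 2)) ^ 2 / q ^ 5).
Definition Cl6 := Cl5.

Definition Gq := ext0 (1/2) (fun q => (q * sin q + cos q - 1) / q ^ 2).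
Definition Pq := ext0 0 (fun q => (1 - cos q) / q).

Definition Dmat (p : params) (q : Vec5) : Mat5 :=
  let ql := q 3%nat in let qr := q 4%nat in
  fun i j =>
  match i, j with
  | 0%nat, 0%nat => Th1 p | 0%nat, 3%nat => Th3 p * Dl1 ql | 0%nat, 4%nat => Th4 p * Dl3 qr
  | 1%nat, 1%nat => Th1 p | 1%nat, 3%nat => Th3 p * Dl2 ql | 1%nat, 4%nat => Th4 p * Dl4 qr
  | 2%nat, 2%nat => Th2 p
  | 3%nat, 0%nat => Th3 p * Dl1 ql | 3%nat, 1%nat => Th3 p * Dl2 ql
  | 3%nat, 3%nat => p_ll p * Th3 p * Dl5 ql + Th5 p
  | 4%nat, 0%nat => Th4 p * Dl3 qr | 4%nat, 1%nat => Th4 p * Dl4 qr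
  | 4%nat, 4%nat => p_lr p * Th4 p * Dl6 qr + Th6 p
  | _, _ => 0
  end.

Definition Cmat (p : params) (q dq : Vec5) : Mat5 :=
  let ql := q 3%nat in let qr := q 4%nat in
  let dql := dq 3%nat in let dqr := dq 4%nat in
  fun i j =>
  match i, j with
  | 0%nat, 3%nat => Th3 p * Cl1 ql * dql | 0%nat, 4%nat => - (Th4 p * Cl3 qr * dqr)
  | 1%nat, 3%nat => Th3 p * Cl2 ql * dql | 1%nat, 4%nat => Th4 p * Cl4 qr * dqr
  | 3%nat, 3%nat => - (2 * p_ll p * Th3 p * Cl5 ql * dql)
  | 4%nat, 4%nat => - (2 * p_lr p * Th4 p * Cl6 qr * dqr)
  | _, _ => 0
  end.

Definition gvec (p : params) (q : Vec5) : Vec5 :=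
  fun i =>
  match i with
  | 1%nat => p_g0 p * Th1 p
  | 3%nat => p_g0 p * p_ml p * p_ll p * Gq (q 3%nat)
  | 4%nat => p_g0 p * p_mr p * p_lr p * Gq (q 4%nat)
  | _ => 0
  end.

Definition Pot (p : params) (q : Vec5) : R :=
  p_g0 p * (Th1 p * q 1%nat + p_ml p * p_ll p * Pq (q 3%nat)
            + p_mr p * p_lr p * Pq (q 4%nat)).

Definition Ham (p : params) (q dq : Vec5) : R :=
  / 2 * dot5 dq (mv5 (Dmat p q) dq) + Pot p q.

(* Derivative of f at x relative to a domain S (one-sided at endpoints of an
   interval). *)
Definition has_deriv_within (S : R -> Prop) (f : R -> R) (l x : R) : Prop :=
  forall eps, 0 < eps -> exists delta, 0 < delta /\
    forall y, S y -> Rabs (y - x) < delta ->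
      Rabs (f y - f x - l * (y - x)) <= eps * Rabs (y - x).

Definition cont_within (S : R -> Prop) (f : R -> R) (x : R) : Prop :=
  forall eps, 0 < eps -> exists delta, 0 < delta /\
    forall y, S y -> Rabs (y - x) < delta -> Rabs (f y - f x) < eps.

Definition Icc (a b : R) : R -> Prop := fun t => a <= t <= b.

(* Main.v *)
Require Import Defs.
From Stdlib Require Import Reals Lra Psatz.
From Coquelicot Require Import Coquelicot.
Open Scope R_scope.

Lemma approx_vals h : sin_approx h 1 = h - h^3/6 /\ sin_approx h 2 = h - h^3/6 + h^5/120 /\ cos_approx h 3 = 1 - h^2/2 + h^4/24 - h^6/720 /\ cos_approx h 1 = 1 - h^2/2 /\ cos_approx h 2 = 1 - h^2/2 + h^4/24.
Proof.
unfold sin_approx, cos_approx, sin_term, cos_term. simpl sum_f_R0. simpl Factorial.fact. simpl mult.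
repeat split; field.
Qed.

Lemma one_le_PI : 1 <= PI.
Proof. pose proof PI2_1. pose proof PI2_Rlt_PI. lra. Qed.

Lemma sin_tay_pos h : 0 <= h <= 1 -> 0 <= sin h - (h - h^3/6) <= h^5/120.
Proof.
intros H. pose proof one_le_PI. destruct (approx_vals h) as (A1 & A2 & _).
destruct (sin_bound h 0) as [B1 B2]; try lra. simpl in B1, B2. rewrite A1 in B1. rewrite A2 in B2. lra.
Qed.

Lemma sin_tay h : Rabs h <= 1 -> Rabs (sin h - (h - h^3/6)) <= Rabs h ^ 5 / 120.
Proof.
intros H. destruct (Rle_dec 0 h) as [Hp|Hn].
- rewrite (Rabs_right h) in * by lra. apply Rabs_le. pose proof (sin_tay_pos h). lra.
- rewrite (Rabs_left h) in * by lra. pose proof (sin_tay_pos (-h)) as K.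
  rewrite sin_neg in K. apply Rabs_le. 
  assert (E: (-h)^3 = - h^3) by ring. rewrite E in K. lra.
Qed.

Lemma cos_tay1 h : Rabs h <= 1 -> 0 <= cos h - (1 - h^2/2) <= h^4/24.
Proof.
intros H. pose proof PI2_1. destruct (approx_vals h) as (_ & _ & A3 & A4 & A5).
apply Rabs_le_between in H.
destruct (cos_bound h 0) as [B1 B2]; try lra. simpl in B1, B2. rewrite A4 in B1. rewrite A5 in B2. lra.
Qed.

Lemma cos_tay2 h : Rabs h <= 1 -> - (h^6/720) <= cos h - (1 - h^2/2 + h^4/24) <= 0.
Proof.
intros H. pose proof PI2_1. destruct (approx_vals h) as (_ & _ & A3 & A4 & A5).
apply Rabs_le_between in H.
destruct (cos_bound h 0) as [B1 B2]; try lra. simpl in B1, B2. rewrite A5 in B2.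
destruct (cos_bound h 1) as [C1 C2]; try lra. simpl in C1. rewrite A3 in C1. lra.
Qed.

Lemma bridge f x l :
  (forall eps, 0 < eps -> exists delta, 0 < delta /\ forall y, Rabs (y - x) < delta ->
     Rabs (f y - f x - l * (y - x)) <= eps * Rabs (y - x)) -> is_derive f x l.
Proof.
intros H. apply is_derive_Reals. intros eps Heps.
destruct (H (eps/2)) as [d [Hd Hy]]; [lra|].
exists (mkposreal d Hd). intros h Hh Hhd. simpl in Hhd.
specialize (Hy (x+h)). replace (x + h - x) with h in Hy by ring.
specialize (Hy Hhd).
replace ((f (x + h) - f x) / h - l) with ((f (x + h) - f x - l * h) / h) by (field; auto).
rewrite Rabs_div by auto.
apply Rcomplements.Rlt_div_l. apply Rabs_pos_lt; auto.
pose proof (Rabs_pos_lt h Hh). nra.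
Qed.

Lemma restrict S f x l : is_derive f x l -> has_deriv_within S f l x.
Proof.
intros H. apply is_derive_Reals in H. intros eps Heps.
destruct (H eps Heps) as [d Hd]. exists d. split; [apply cond_pos|].
intros y _ Hy. destruct (Req_dec y x) as [->|Hne].
- replace (f x - f x - l * (x - x)) with 0 by ring. rewrite Rabs_R0. apply Rmult_le_pos; [lra|apply Rabs_pos].
- specialize (Hd (y - x)). replace (x + (y - x)) with y in Hd by ring.
  assert (Hn: y - x <> 0) by lra. specialize (Hd Hn Hy).
  replace (f y - f x - l * (y - x)) with (((f y - f x)/(y-x) - l) * (y - x)) by (field; auto).
  rewrite Rabs_mult. pose proof (Rabs_pos (y-x)). nra.
Qed.

Lemma deriv0 f L K : 0 < K ->
  (forall h, h <> 0 -> Rabs h <= 1 -> Rabs (f h - f 0 - L * h) <= K * h^2) -> is_derive f 0 L.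
Proof.
intros HK H. apply bridge. intros eps Heps. exists (Rmin 1 (eps/K)). split.
{ apply Rmin_pos; [lra| apply Rdiv_lt_0_compat; lra]. }
intros y Hy. rewrite Rminus_0_r in *. destruct (Req_dec y 0) as [->|Hne].
- replace (f 0 - f 0 - L * 0) with 0 by ring. rewrite Rabs_R0. lra.
- assert (H1: Rabs y <= 1) by (pose proof (Rmin_l 1 (eps/K)); lra).
  assert (H2: Rabs y <= eps / K) by (pose proof (Rmin_r 1 (eps/K)); lra).
  specialize (H y Hne H1). eapply Rle_trans; [exact H|].
  replace (y^2) with (Rabs y * Rabs y) by (rewrite <- Rabs_mult; rewrite Rabs_right; [ring| nra]).
  apply Rcomplements.Rle_div_r in H2; [|lra].
  pose proof (Rabs_pos y). nra.
Qed.

Lemma quot_bound X h n K : h <> 0 -> Rabs X <= K * (Rabs h ^ n * h^2) -> Rabs (X / h^n) <= K * h^2.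
Proof.
intros Hh H. rewrite Rabs_div by (apply pow_nonzero; auto). rewrite <- RPow_abs.
apply Rcomplements.Rle_div_l. apply pow_lt. apply Rabs_pos_lt; auto. lra.
Qed.

Lemma ext0_ne v0 f x : x <> 0 -> ext0 v0 f x = f x.
Proof. intros H. unfold ext0. destruct (Req_EM_T x 0); [contradiction|reflexivity]. Qed.
Lemma ext0_0 v0 f : ext0 v0 f 0 = v0.
Proof. unfold ext0. destruct (Req_EM_T 0 0); [reflexivity|contradiction]. Qed.

Lemma deriv_nz (v0 : R) (f : R -> R) x l : x <> 0 -> is_derive f x l -> is_derive (ext0 v0 f) x l.
Proof.
intros Hx H. apply (is_derive_ext_loc f). 2: exact H.
assert (Hp : 0 < Rabs x) by (apply Rabs_pos_lt; auto).
exists (mkposreal _ Hp). intros y Hy. simpl in Hy. unfold ball in Hy; simpl in Hy.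
unfold AbsRing_ball, abs, minus, plus, opp in Hy; simpl in Hy.
rewrite ext0_ne; auto. intros ->. rewrite Rplus_0_l, Rabs_Ropp in Hy. lra.
Qed.

Ltac nzs Hx := repeat split; first [exact (pow_nonzero _ 2 Hx) | exact (pow_nonzero _ 3 Hx) | exact (pow_nonzero _ 4 Hx) | exact (pow_nonzero _ 5 Hx) | exact Hx | exact I].

Lemma Dl1_nz x : x <> 0 -> is_derive Dl1 x (Cl1 x).
Proof.
intros Hx. unfold Dl1, Cl1. rewrite ext0_ne by auto. apply deriv_nz; auto.
auto_derive; [nzs Hx|]. field. auto.
Qed.

Lemma Dl2_nz x : x <> 0 -> is_derive Dl2 x (Cl2 x).
Proof.
intros Hx. unfold Dl2, Cl2. rewrite ext0_ne by auto. apply deriv_nz; auto.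
auto_derive; [nzs Hx|]. field. auto.
Qed.

Lemma Pq_nz x : x <> 0 -> is_derive Pq x (Gq x).
Proof.
intros Hx. unfold Pq, Gq. rewrite ext0_ne by auto. apply deriv_nz; auto.
auto_derive; [nzs Hx|]. field. auto.
Qed.

Lemma Dl5_nz x : x <> 0 -> is_derive Dl5 x (-4 * Cl5 x).
Proof.
intros Hx. unfold Dl5, Cl5. rewrite ext0_ne by auto. apply deriv_nz; auto.
auto_derive; [nzs Hx|].
assert (Ex : x = 2 * (x/2)) by field.
assert (Cx : cos x = cos (x/2) * cos (x/2) - sin (x/2) * sin (x/2)) by (rewrite <- cos_2a; f_equal; exact Ex).
assert (Sx : sin x = 2 * sin (x/2) * cos (x/2)) by (rewrite <- sin_2a; f_equal; exact Ex).
pose proof (sin2_cos2 (x/2)) as H. unfold Rsqr in H.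
assert (E : (x * cos (x/2) - 2 * sin (x/2))^2 = x^2*(1+cos x)/2 - 2*x*sin x + 2*(1-cos x)).
{ rewrite Cx, Sx. set (s := sin (x/2)) in *. set (c := cos (x/2)) in *.
  assert (E2: (x*c-2*s)^2 = x ^ 2 * (1 + (c * c - s * s)) / 2 - 2 * x * (2 * s * c) + 2 * (1 - (c * c - s * s)) + (s*s+c*c-1)*(x^2/2+2)) by field.
  rewrite E2, H. field. }
rewrite E. field. auto.
Qed.


Lemma abs_facts h : Rabs h <= 1 -> 0 <= Rabs h /\ h^2 = Rabs h ^2.
Proof. intros. split. apply Rabs_pos. rewrite pow2_abs. auto. Qed.

Lemma Dl1_0 : is_derive Dl1 0 (Cl1 0).
Proof.
unfold Cl1 at 1. rewrite ext0_0. apply (deriv0 _ _ 1); [lra|]. intros h Hh H1.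
unfold Dl1. rewrite ext0_ne, ext0_0 by auto.
replace ((sin h - h * cos h) / h ^ 2 - 0 - 1/3 * h) with ((sin h - h * cos h - h^3/3) / h ^ 2) by (field; auto).
apply quot_bound; auto.
pose proof (sin_tay h H1). pose proof (cos_tay1 h H1).
replace (sin h - h * cos h - h^3/3) with ((sin h - (h - h^3/6)) + - (h * (cos h - (1 - h^2/2)))) by field.
eapply Rle_trans; [apply Rabs_triang|]. rewrite Rabs_Ropp, Rabs_mult.
rewrite (Rabs_right (cos h - _)) by lra.
destruct (abs_facts h H1) as [Ha Hs]. set (a := Rabs h) in *.
replace (h^4) with ((h^2)^2) in * by ring. rewrite Hs in *.
assert (a^5 <= a^4) by (replace (a^5) with (a*a^4) by ring; pose proof (pow_le a 4 Ha); nra).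
nra.
Qed.

Lemma Dl2_0 : is_derive Dl2 0 (Cl2 0).
Proof.
unfold Cl2 at 1. rewrite ext0_0. apply (deriv0 _ _ 1); [lra|]. intros h Hh H1.
unfold Dl2. rewrite ext0_ne, ext0_0 by auto.
replace ((cos h + h * sin h - 1) / h ^ 2 - 1/2 - 0 * h) with ((cos h + h * sin h - 1 - h^2/2) / h ^ 2) by (field; auto).
apply quot_bound; auto.
pose proof (sin_tay h H1). pose proof (cos_tay1 h H1).
replace (cos h + h * sin h - 1 - h^2/2) with ((cos h - (1 - h^2/2)) + (h * (sin h - (h - h^3/6)) - h^4/6)) by field.
eapply Rle_trans; [apply Rabs_triang|]. eapply Rle_trans; [apply Rplus_le_compat_l; apply Rabs_triang|].
rewrite Rabs_Ropp, Rabs_mult.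
rewrite (Rabs_right (cos h - _)) by lra. rewrite (Rabs_right (h^4/6)) by (apply Rle_ge; replace (h^4) with ((h^2)^2) by ring; pose proof (pow2_ge_0 (h^2)); lra).
destruct (abs_facts h H1) as [Ha Hs]. set (a := Rabs h) in *.
replace (h^4) with ((h^2)^2) in * by ring. rewrite Hs in *.
assert (a^6 <= a^4). { replace (a^6) with (a^2*a^4) by ring. pose proof (pow_le a 4 Ha). assert (a^2<=1) by nra. nra. }
replace (a * (a^5/120)) with (a^6/120) by field.
nra.
Qed.

Lemma Dl5_0 : is_derive Dl5 0 (-4 * Cl5 0).
Proof.
unfold Cl5 at 1. rewrite ext0_0. apply (deriv0 _ _ 1); [lra|]. intros h Hh H1.
unfold Dl5. rewrite ext0_ne, ext0_0 by auto.
replace ((h ^ 2 + 2 - 2 * cos h - 2 * h * sin h) / h ^ 4 - 1/4 - (-4 * 0) * h) with ((h ^ 2 + 2 - 2 * cos h - 2 * h * sin h - h^4/4) / h ^ 4) by (field; auto).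
apply quot_bound; auto.
pose proof (sin_tay h H1). pose proof (cos_tay2 h H1).
replace (h ^ 2 + 2 - 2 * cos h - 2 * h * sin h - h^4/4) with (- (2 * (cos h - (1 - h^2/2 + h^4/24))) + - (2 * h * (sin h - (h - h^3/6)))) by field.
eapply Rle_trans; [apply Rabs_triang|]. rewrite !Rabs_Ropp, !Rabs_mult.
rewrite (Rabs_right 2) by lra.
rewrite (Rabs_left1 (cos h - _)) by lra.
destruct (abs_facts h H1) as [Ha Hs]. set (a := Rabs h) in *.
replace (h^6) with ((h^2)^3) in * by ring. rewrite Hs in *.
replace ((a^2)^3) with (a^4*a^2) in * by ring.
replace (a * (a^5/120)) with (a^4*a^2/120) by field.
pose proof (pow_le a 4 Ha). pose proof (pow_le a 2 Ha).
nra.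
Qed.

Lemma Pq_0 : is_derive Pq 0 (Gq 0).
Proof.
unfold Gq at 1. rewrite ext0_0. apply (deriv0 _ _ 1); [lra|]. intros h Hh H1.
unfold Pq. rewrite ext0_ne, ext0_0 by auto.
replace ((1 - cos h) / h - 0 - 1/2 * h) with ((- (cos h - (1 - h^2/2))) / h ^ 1) by (field; auto).
apply quot_bound; auto.
pose proof (cos_tay1 h H1). rewrite Rabs_Ropp.
rewrite (Rabs_right (cos h - _)) by lra.
destruct (abs_facts h H1) as [Ha Hs]. set (a := Rabs h) in *.
replace (h^4) with ((h^2)^2) in * by ring. rewrite Hs in *.
pose proof (pow_le a 2 Ha). pose proof (pow_le a 3 Ha).
replace ((a^2)^2) with (a^3*a) by field. nra.
Qed.

Lemma Dl1_d x : is_derive Dl1 x (Cl1 x).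
Proof. destruct (Req_dec x 0) as [->|H]; [apply Dl1_0|apply Dl1_nz; auto]. Qed.
Lemma Dl2_d x : is_derive Dl2 x (Cl2 x).
Proof. destruct (Req_dec x 0) as [->|H]; [apply Dl2_0|apply Dl2_nz; auto]. Qed.
Lemma Dl5_d x : is_derive Dl5 x (-4 * Cl5 x).
Proof. destruct (Req_dec x 0) as [->|H]; [apply Dl5_0|apply Dl5_nz; auto]. Qed.
Lemma Pq_d x : is_derive Pq x (Gq x).
Proof. destruct (Req_dec x 0) as [->|H]; [apply Pq_0|apply Pq_nz; auto]. Qed.
Lemma Dl3_eq x : Dl3 x = - Dl1 x.
Proof. unfold Dl3, Dl1, ext0. destruct (Req_EM_T x 0). ring. field. auto. Qed.
Lemma Dl3_d x : is_derive Dl3 x (- Cl3 x).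
Proof. apply (is_derive_ext (fun x => - Dl1 x)). intros; symmetry; apply Dl3_eq.
apply (is_derive_opp Dl1). apply Dl1_d. Qed.

Definition mk5 (a b c d e : R) : Vec5 := fun i =>
  match i with 0%nat => a | 1%nat => b | 2%nat => c | 3%nat => d | _ => e end.

Lemma Dl4_d x : is_derive Dl4 x (Cl4 x).
Proof. exact (Dl2_d x). Qed.
Lemma Dl6_d x : is_derive Dl6 x (-4 * Cl6 x).
Proof. exact (Dl5_d x). Qed.

Lemma H_deriv p (Q0 Q1 Q2 Q3 Q4 V0 V1 V2 V3 V4 : R -> R) (w0 w1 w2 w3 w4 u0 u1 u2 u3 u4 t : R) :
  is_derive Q0 t (V0 t) -> is_derive Q1 t (V1 t) -> is_derive Q2 t (V2 t) ->
  is_derive Q3 t (V3 t) -> is_derive Q4 t (V4 t) ->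
  is_derive V0 t w0 -> is_derive V1 t w1 -> is_derive V2 t w2 ->
  is_derive V3 t w3 -> is_derive V4 t w4 ->
  (forall i, (i < 5)%nat ->
     mv5 (Dmat p (mk5 (Q0 t) (Q1 t) (Q2 t) (Q3 t) (Q4 t))) (mk5 w0 w1 w2 w3 w4) i
     + mv5 (Cmat p (mk5 (Q0 t) (Q1 t) (Q2 t) (Q3 t) (Q4 t)) (mk5 (V0 t) (V1 t) (V2 t) (V3 t) (V4 t))) (mk5 (V0 t) (V1 t) (V2 t) (V3 t) (V4 t)) i
     + gvec p (mk5 (Q0 t) (Q1 t) (Q2 t) (Q3 t) (Q4 t)) i = mk5 u0 u1 u2 u3 u4 i) ->
  is_derive (fun s => Ham p (mk5 (Q0 s) (Q1 s) (Q2 s) (Q3 s) (Q4 s)) (mk5 (V0 s) (V1 s) (V2 s) (V3 s) (V4 s))) t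
    (dot5 (mk5 (V0 t) (V1 t) (V2 t) (V3 t) (V4 t)) (mk5 u0 u1 u2 u3 u4)).
Proof.
intros H0 H1 H2 H3 H4 K0 K1 K2 K3 K4 EOM.
pose proof (EOM 0%nat ltac:(lia)) as E0. pose proof (EOM 1%nat ltac:(lia)) as E1.
pose proof (EOM 2%nat ltac:(lia)) as E2. pose proof (EOM 3%nat ltac:(lia)) as E3.
pose proof (EOM 4%nat ltac:(lia)) as E4. clear EOM.
unfold Ham, dot5, mv5, Dmat, Cmat, gvec, Pot, mk5 in *; cbv beta iota zeta in *.
assert (XQ0 : ex_derive Q0 t) by (eexists; exact H0).
assert (XQ1 : ex_derive Q1 t) by (eexists; exact H1).
assert (XQ2 : ex_derive Q2 t) by (eexists; exact H2).
assert (XQ3 : ex_derive Q3 t) by (eexists; exact H3).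
assert (XQ4 : ex_derive Q4 t) by (eexists; exact H4).
assert (XV0 : ex_derive V0 t) by (eexists; exact K0).
assert (XV1 : ex_derive V1 t) by (eexists; exact K1).
assert (XV2 : ex_derive V2 t) by (eexists; exact K2).
assert (XV3 : ex_derive V3 t) by (eexists; exact K3).
assert (XV4 : ex_derive V4 t) by (eexists; exact K4).
assert (XD1 : forall x, ex_derive Dl1 x) by (intro; eexists; apply Dl1_d).
assert (XD2 : forall x, ex_derive Dl2 x) by (intro; eexists; apply Dl2_d).
assert (XD3 : forall x, ex_derive Dl3 x) by (intro; eexists; apply Dl3_d).
assert (XD4 : forall x, ex_derive Dl4 x) by (intro; eexists; apply Dl4_d).
assert (XD5 : forall x, ex_derive Dl5 x) by (intro; eexists; apply Dl5_d).
assert (XD6 : forall x, ex_derive Dl6 x) by (intro; eexists; apply Dl6_d).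
assert (XP : forall x, ex_derive Pq x) by (intro; eexists; apply Pq_d).
auto_derive.
- (repeat split; first [exact XQ0|exact XQ1|exact XQ2|exact XQ3|exact XQ4|exact XV0|exact XV1|exact XV2|exact XV3|exact XV4|apply XD1|apply XD2|apply XD3|apply XD4|apply XD5|apply XD6|apply XP]).
- replace (Derive (fun x => Q0 x) t) with (V0 t) by (symmetry; apply is_derive_unique; exact H0).
  replace (Derive (fun x => V0 x) t) with w0 by (symmetry; apply is_derive_unique; exact K0).
  replace (Derive (fun x => Q1 x) t) with (V1 t) by (symmetry; apply is_derive_unique; exact H1).
  replace (Derive (fun x => V1 x) t) with w1 by (symmetry; apply is_derive_unique; exact K1).
  replace (Derive (fun x => Q2 x) t) with (V2 t) by (symmetry; apply is_derive_unique; exact H2).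
  replace (Derive (fun x => V2 x) t) with w2 by (symmetry; apply is_derive_unique; exact K2).
  replace (Derive (fun x => Q3 x) t) with (V3 t) by (symmetry; apply is_derive_unique; exact H3).
  replace (Derive (fun x => V3 x) t) with w3 by (symmetry; apply is_derive_unique; exact K3).
  replace (Derive (fun x => Q4 x) t) with (V4 t) by (symmetry; apply is_derive_unique; exact H4).
  replace (Derive (fun x => V4 x) t) with w4 by (symmetry; apply is_derive_unique; exact K4).
  replace (Derive (fun x => Dl1 x) (Q3 t)) with (Cl1 (Q3 t)) by (symmetry; apply is_derive_unique; apply Dl1_d).
  replace (Derive (fun x => Dl2 x) (Q3 t)) with (Cl2 (Q3 t)) by (symmetry; apply is_derive_unique; apply Dl2_d).
  replace (Derive (fun x => Dl5 x) (Q3 t)) with (-4 * Cl5 (Q3 t)) by (symmetry; apply is_derive_unique; apply Dl5_d).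
  replace (Derive (fun x => Dl3 x) (Q4 t)) with (- Cl3 (Q4 t)) by (symmetry; apply is_derive_unique; apply Dl3_d).
  replace (Derive (fun x => Dl4 x) (Q4 t)) with (Cl4 (Q4 t)) by (symmetry; apply is_derive_unique; apply Dl4_d).
  replace (Derive (fun x => Dl6 x) (Q4 t)) with (-4 * Cl6 (Q4 t)) by (symmetry; apply is_derive_unique; apply Dl6_d).
  replace (Derive (fun x => Pq x) (Q3 t)) with (Gq (Q3 t)) by (symmetry; apply is_derive_unique; apply Pq_d).
  replace (Derive (fun x => Pq x) (Q4 t)) with (Gq (Q4 t)) by (symmetry; apply is_derive_unique; apply Pq_d).
  rewrite <- E0, <- E1, <- E2, <- E3, <- E4.
  field.
Qed.


Definition ext (T : R) (f df : R -> R) (t : R) : R :=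
  if Rlt_dec t 0 then f 0 + df 0 * t else if Rlt_dec T t then f T + df T * (t - T) else f t.

Lemma ext_in T f df t : 0 <= t <= T -> ext T f df t = f t.
Proof.
intros H. unfold ext. destruct (Rlt_dec t 0); [lra|]. destruct (Rlt_dec T t); [lra|]. reflexivity.
Qed.

Lemma ext_deriv T f df x : 0 < T -> (forall y, Icc 0 T y -> has_deriv_within (Icc 0 T) f (df y) y) ->
  Icc 0 T x -> is_derive (ext T f df) x (df x).
Proof.
intros HT Hd Hx. pose proof (Hd x Hx) as H. apply bridge. intros eps Heps.
destruct (H eps Heps) as [d [Hd0 Hy]].
assert (ex : ext T f df x = f x) by (apply ext_in; exact Hx).
rewrite ex. unfold Icc in Hx.
assert (Hz : forall a, 0 <= eps * Rabs a) by (intro; apply Rmult_le_pos; [lra|apply Rabs_pos]).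
destruct (Req_dec x 0) as [E0|N0]; [| destruct (Req_dec x T) as [ET|NT]].
- subst x. exists (Rmin d T). split; [apply Rmin_pos; lra|]. intros y Hy'.
  pose proof (proj1 (Rabs_lt_between _ _) Hy') as B. pose proof (Rmin_l d T). pose proof (Rmin_r d T).
  unfold ext at 1. destruct (Rlt_dec y 0).
  + replace (f 0 + df 0 * y - f 0 - df 0 * (y - 0)) with 0 by ring. rewrite Rabs_R0. apply Hz.
  + destruct (Rlt_dec T y); [lra|]. apply Hy; [unfold Icc; lra|lra].
- subst x. exists (Rmin d T). split; [apply Rmin_pos; lra|]. intros y Hy'.
  pose proof (proj1 (Rabs_lt_between _ _) Hy') as B. pose proof (Rmin_l d T). pose proof (Rmin_r d T).
  unfold ext at 1. destruct (Rlt_dec y 0); [lra|].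
  destruct (Rlt_dec T y).
  + replace (f T + df T * (y - T) - f T - df T * (y - T)) with 0 by ring. rewrite Rabs_R0. apply Hz.
  + apply Hy; [unfold Icc; lra|lra].
- exists (Rmin d (Rmin x (T - x))). split; [apply Rmin_pos; [lra|apply Rmin_pos; lra]|]. intros y Hy'.
  pose proof (proj1 (Rabs_lt_between _ _) Hy') as B. pose proof (Rmin_l d (Rmin x (T - x))).
  pose proof (Rmin_r d (Rmin x (T - x))). pose proof (Rmin_l x (T - x)). pose proof (Rmin_r x (T - x)).
  unfold ext at 1. destruct (Rlt_dec y 0); [lra|]. destruct (Rlt_dec T y); [lra|].
  apply Hy; [unfold Icc; lra|lra].
Qed.

Lemma deriv_cont S f l x : has_deriv_within S f l x -> cont_within S f x.
Proof.
intros H eps Heps. destruct (H 1 ltac:(lra)) as [d [Hd Hy]].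
exists (Rmin d (eps / (Rabs l + 1))). split.
{ apply Rmin_pos; [lra|]. apply Rdiv_lt_0_compat; [lra|]. pose proof (Rabs_pos l); lra. }
intros y Sy Hy'. pose proof (Rmin_l d (eps / (Rabs l + 1))). pose proof (Rmin_r d (eps / (Rabs l + 1))).
specialize (Hy y Sy ltac:(lra)).
assert (Hl : 0 < Rabs l + 1) by (pose proof (Rabs_pos l); lra).
replace (f y - f x) with ((f y - f x - l * (y - x)) + l * (y - x)) by ring.
eapply Rle_lt_trans; [apply Rabs_triang|]. rewrite Rabs_mult.
assert (Rabs (y - x) * (Rabs l + 1) < eps).
{ apply Rcomplements.Rlt_div_r; lra. }
pose proof (Rabs_pos (y - x)). pose proof (Rabs_pos l). nra.
Qed.

Definition clamp (T t : R) : R := Rmax 0 (Rmin T t).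

Lemma clamp_in T t : 0 <= T -> Icc 0 T (clamp T t).
Proof.
intros HT. unfold clamp, Icc. split; [apply Rmax_l|]. apply Rmax_lub; [lra|apply Rmin_l].
Qed.

Lemma clamp_id T t : Icc 0 T t -> clamp T t = t.
Proof.
intros [H1 H2]. unfold clamp. rewrite Rmin_right by lra. rewrite Rmax_right by lra. reflexivity.
Qed.

Lemma clamp_lip T x y : Rabs (clamp T y - clamp T x) <= Rabs (y - x).
Proof.
unfold clamp, Rmax, Rmin. repeat destruct Rle_dec; split_Rabs; lra.
Qed.

Lemma clamp_cont T f : 0 <= T -> (forall x, Icc 0 T x -> cont_within (Icc 0 T) f x) ->
  forall t, continuous (fun s => f (clamp T s)) t.
Proof.
intros HT H t. apply continuity_pt_filterlim.
intros eps Heps. destruct (H (clamp T t) (clamp_in T t HT) eps Heps) as [d [Hd Hy]].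
exists d. split; auto. intros y [_ Hy']. simpl in *. unfold R_dist in *.
apply Hy. apply clamp_in; auto. pose proof (clamp_lip T t y). lra.
Qed.

Lemma cont_plus (f g : R -> R) x : continuous f x -> continuous g x -> continuous (fun s => f s + g s) x.
Proof. intros. apply (continuous_plus f g); auto. Qed.
Lemma cont_mult (f g : R -> R) x : continuous f x -> continuous g x -> continuous (fun s => f s * g s) x.
Proof. intros. apply (continuous_mult f g); auto. Qed.

Lemma hdw_ext S (f g : R -> R) l x : (forall y, S y -> f y = g y) -> S x ->
  has_deriv_within S f l x -> has_deriv_within S g l x.
Proof.
intros E Sx H eps Heps. destruct (H eps Heps) as [d [Hd Hy]]. exists d. split; auto.
intros y Sy Hyx. rewrite <- (E y Sy), <- (E x Sx). apply Hy; auto.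
Qed.

Lemma Dl5_sq x : Dl5 x = Dl1 x ^ 2 + Dl2 x ^ 2.
Proof.
unfold Dl5, Dl1, Dl2, ext0. destruct (Req_EM_T x 0). { field. }
pose proof (sin2_cos2 x) as H. unfold Rsqr in H.
replace (((sin x - x * cos x) / x ^ 2) ^ 2 + ((cos x + x * sin x - 1) / x ^ 2) ^ 2)
  with ((x ^ 2 + 2 - 2 * cos x - 2 * x * sin x + (sin x * sin x + cos x * cos x - 1) * (1 + x^2)) / x ^ 4)
  by (field; auto).
rewrite H. field. auto.
Qed.

Lemma kin_nonneg p u v : params_pos p -> 0 <= dot5 v (mv5 (Dmat p u) v).
Proof.
intros (Hm & Hml & Hmr & HI & HIl & HIr & Hll & Hlr & Hg).
unfold dot5, mv5, Dmat; cbv beta iota zeta.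
rewrite Dl3_eq. change Dl4 with Dl2. change Dl6 with Dl5. rewrite !Dl5_sq.
unfold Th1, Th2, Th3, Th4, Th5, Th6.
set (d1 := Dl1 (u 3%nat)). set (d2 := Dl2 (u 3%nat)). set (e1 := Dl1 (u 4%nat)). set (e2 := Dl2 (u 4%nat)).
set (v0 := v 0%nat). set (v1 := v 1%nat). set (v2 := v 2%nat). set (v3 := v 3%nat). set (v4 := v 4%nat).
set (SOS := p_m p * (v0^2 + v1^2) + p_ml p * ((v0 + p_ll p * v3 * d1)^2 + (v1 + p_ll p * v3 * d2)^2)
  + p_mr p * ((v0 - p_lr p * v4 * e1)^2 + (v1 + p_lr p * v4 * e2)^2) + p_I p * v2^2 + p_Il p * v3^2 + p_Ir p * v4^2).
assert (0 <= SOS).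
{ unfold SOS. repeat apply Rplus_le_le_0_compat; apply Rmult_le_pos; try lra;
  repeat apply Rplus_le_le_0_compat; apply pow2_ge_0. }
match goal with |- 0 <= ?e => assert (e = SOS) by (unfold SOS; ring) end.
lra.
Qed.

Theorem mainTheorem5 (p : params) (T : R) (q dq ddq tau : R -> Vec5) :
  params_pos p -> 0 < T ->
  (* tau continuous on [0,T] *)
  (forall (i : nat) t, (i < 5)%nat -> Icc 0 T t ->
     cont_within (Icc 0 T) (fun s => tau s i) t) ->
  (* q is C^2 on [0,T] with velocity dq and acceleration ddq *)
  (forall (i : nat) t, (i < 5)%nat -> Icc 0 T t ->
     has_deriv_within (Icc 0 T) (fun s => q s i) (dq t i) t) ->
  (forall (i : nat) t, (i < 5)%nat -> Icc 0 T t ->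
     has_deriv_within (Icc 0 T) (fun s => dq s i) (ddq t i) t) ->
  (forall (i : nat) t, (i < 5)%nat -> Icc 0 T t ->
     cont_within (Icc 0 T) (fun s => ddq s i) t) ->
  (* equations of motion D(q) ddq + C(q,dq) dq + g(q) = tau *)
  (forall (i : nat) t, (i < 5)%nat -> Icc 0 T t ->
     mv5 (Dmat p (q t)) (ddq t) i + mv5 (Cmat p (q t) (dq t)) (dq t) i
       + gvec p (q t) i = tau t i) ->
  (forall t, Icc 0 T t ->
     has_deriv_within (Icc 0 T) (fun s => Ham p (q s) (dq s))
       (dot5 (dq t) (tau t)) t)
  /\ is_RInt (fun t => dot5 (dq t) (tau t)) 0 T
       (Ham p (q T) (dq T) - Ham p (q 0) (dq 0))
  /\ (forall Pmin, (forall t, Icc 0 T t -> Pmin <= Pot p (q t)) ->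
       RInt (fun t => dot5 (dq t) (tau t)) 0 T >= - Ham p (q 0) (dq 0) + Pmin).
Proof.
intros Hp HT Htau Hq Hdq Hddq HEOM.
set (Q := fun i => ext T (fun s => q s i) (fun s => dq s i)).
set (V := fun i => ext T (fun s => dq s i) (fun s => ddq s i)).
set (F := fun s => Ham p (mk5 (Q 0%nat s) (Q 1%nat s) (Q 2%nat s) (Q 3%nat s) (Q 4%nat s))
                          (mk5 (V 0%nat s) (V 1%nat s) (V 2%nat s) (V 3%nat s) (V 4%nat s))).
assert (QV : forall i t, Icc 0 T t -> Q i t = q t i /\ V i t = dq t i).
{ intros i t Ht. unfold Q, V. split; apply ext_in; exact Ht. }
assert (HQ : forall i t, (i < 5)%nat -> Icc 0 T t -> is_derive (Q i) t (V i t)).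
{ intros i t Hi Ht. rewrite (proj2 (QV i t Ht)). unfold Q. apply (ext_deriv T (fun s => q s i) (fun s => dq s i)); auto. }
assert (HV : forall i t, (i < 5)%nat -> Icc 0 T t -> is_derive (V i) t (ddq t i)).
{ intros i t Hi Ht. unfold V. apply (ext_deriv T (fun s => dq s i) (fun s => ddq s i)); auto. }
assert (FH : forall s, Icc 0 T s -> F s = Ham p (q s) (dq s)).
{ intros s Hs. unfold F.
  rewrite !(proj1 (QV _ s Hs)), !(proj2 (QV _ s Hs)). reflexivity. }
assert (Fd : forall t, Icc 0 T t -> is_derive F t (dot5 (dq t) (tau t))).
{ intros t Ht.
  assert (G := H_deriv p (Q 0%nat) (Q 1%nat) (Q 2%nat) (Q 3%nat) (Q 4%nat)
     (V 0%nat) (V 1%nat) (V 2%nat) (V 3%nat) (V 4%nat)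
     (ddq t 0%nat) (ddq t 1%nat) (ddq t 2%nat) (ddq t 3%nat) (ddq t 4%nat)
     (tau t 0%nat) (tau t 1%nat) (tau t 2%nat) (tau t 3%nat) (tau t 4%nat) t
     (HQ 0%nat t ltac:(lia) Ht) (HQ 1%nat t ltac:(lia) Ht) (HQ 2%nat t ltac:(lia) Ht) (HQ 3%nat t ltac:(lia) Ht) (HQ 4%nat t ltac:(lia) Ht)
     (HV 0%nat t ltac:(lia) Ht) (HV 1%nat t ltac:(lia) Ht) (HV 2%nat t ltac:(lia) Ht) (HV 3%nat t ltac:(lia) Ht) (HV 4%nat t ltac:(lia) Ht)).
  rewrite !(proj2 (QV _ t Ht)) in G.
  apply G. intros i Hi. rewrite ?(proj1 (QV _ t Ht)), ?(proj2 (QV _ t Ht)).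
  destruct i as [|[|[|[|[|i]]]]]; try lia; exact (HEOM _ t Hi Ht). }
assert (HI : is_RInt (fun t => dot5 (dq t) (tau t)) 0 T (Ham p (q T) (dq T) - Ham p (q 0) (dq 0))).
{ assert (R0 : Rmin 0 T = 0) by (apply Rmin_left; lra).
  assert (R1 : Rmax 0 T = T) by (apply Rmax_right; lra).
  assert (G := is_RInt_derive F (fun s => dot5 (dq (clamp T s)) (tau (clamp T s))) 0 T).
  rewrite R0, R1 in G.
  rewrite <- (FH T) by (unfold Icc; lra). rewrite <- (FH 0) by (unfold Icc; lra).
  apply (is_RInt_ext (fun s => dot5 (dq (clamp T s)) (tau (clamp T s)))).
  { rewrite R0, R1. intros x Hx. rewrite clamp_id; auto. unfold Icc; lra. }
  apply G.
  - intros x Hx. rewrite clamp_id by exact Hx. apply Fd; exact Hx.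
  - intros x _.
    assert (Cd : forall i, (i < 5)%nat -> continuous (fun s => dq (clamp T s) i) x).
    { intros i Hi. apply (clamp_cont T (fun s => dq s i)); [lra|].
      intros y Hy. eapply deriv_cont. apply Hdq; auto. }
    assert (Ct : forall i, (i < 5)%nat -> continuous (fun s => tau (clamp T s) i) x).
    { intros i Hi. apply (clamp_cont T (fun s => tau s i)); [lra|].
      intros y Hy. apply Htau; auto. }
    unfold dot5.
    repeat apply cont_plus; apply cont_mult; first [apply Cd; lia | apply Ct; lia]. }
split; [|split].
- intros t Ht. apply (hdw_ext _ F); auto. apply restrict. apply Fd; auto.
- exact HI.
- intros Pmin HP. rewrite (is_RInt_unique _ _ _ _ HI).
  assert (K := kin_nonneg p (q T) (dq T) Hp).
  assert (P := HP T ltac:(unfold Icc; lra)).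
  unfold Ham. lra.
Qed.
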